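(* Let $(X,d)$ be an ultra-metric space and let $\pi:G\times X\to X$ be a continuous action of a topological group $G$ which is $\pi$-uniform with respect to the uniformity of $d$. Suppose some orbit $Gx_0$ ($x_0\in X$) is $d$-bounded. Then there exist an ultra-normed Boolean group $(E,\|\cdot\|)$ on which $G$ acts continuously by group automorphisms (with respect to the topology of $\|\cdot\|$) and a $G$-equivariant isometric embedding $\alpha:X\hookrightarrow E$ (i.e. $\|\alpha(x)-\alpha(y)\|=d(x,y)$) such that $\alpha(X)$ is closed in $E$.
   Context: An ultra-metric is a metric with $d(x,z)\le\max\{d(x,y),d(y,z)\}$. An ultra-norm on an abelian group $E$ is a function $\|\cdot\|:E\to[0,\infty)$ with $\|u\|=0\iff u=0$, $\|u\|=\|-u\|$, and $\|u+v\|\le\max\{\|u\|,\|v\|\}$; $E$ is topologized by the metric $\|u-v\|$. A Boolean group is an abelian group with $x+x=0$ for all $x$. An action on a uniform space is $\pi$-uniform if for every entourage $\varepsilon$ and $g_0\in G$ there exist an entourage $\delta$ and a neighborhood $O$ of $g_0$ such that $(gx,gy)\in\varepsilon$ whenever $(x,y)\in\delta$ and $g\in O$. *)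

(* Defs.v *)
From Stdlib Require Export Reals.
Open Scope R_scope.

Definition is_ultrametric {X : Type} (d : X -> X -> R) : Prop :=
  (forall x y, 0 <= d x y) /\
  (forall x y, d x y = 0 <-> x = y) /\
  (forall x y, d x y = d y x) /\
  (forall x y z, d x z <= Rmax (d x y) (d y z)).

Definition is_topology {T : Type} (opn : (T -> Prop) -> Prop) : Prop :=
  opn (fun _ => True) /\
  (forall U V, opn U -> opn V -> opn (fun x => U x /\ V x)) /\
  (forall F : (T -> Prop) -> Prop, (forall U, F U -> opn U) ->
     opn (fun x => exists U, F U /\ U x)).

Definition is_group {G : Type} (mul : G -> G -> G) (inv : G -> G) (e : G) : Prop :=
  (forall a b c, mul a (mul b c) = mul (mul a b) c) /\
  (forall a, mul e a = a) /\ (forall a, mul a e = a) /\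
  (forall a, mul (inv a) a = e) /\ (forall a, mul a (inv a) = e).

Definition is_topological_group {G : Type} (mul : G -> G -> G) (inv : G -> G)
    (e : G) (opn : (G -> Prop) -> Prop) : Prop :=
  is_group mul inv e /\ is_topology opn /\
  (forall g h U, opn U -> U (mul g h) ->
     exists V W, opn V /\ opn W /\ V g /\ W h /\
       (forall g' h', V g' -> W h' -> U (mul g' h'))) /\
  (forall g U, opn U -> U (inv g) ->
     exists V, opn V /\ V g /\ (forall g', V g' -> U (inv g'))).

Definition is_action {G Y : Type} (mul : G -> G -> G) (e : G) (act : G -> Y -> Y) : Prop :=
  (forall y, act e y = y) /\
  (forall g h y, act (mul g h) y = act g (act h y)).

Definition action_continuous {G Y : Type} (opn : (G -> Prop) -> Prop)
    (dist : Y -> Y -> R) (act : G -> Y -> Y) : Prop :=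
  forall g y eps, 0 < eps ->
    exists O delta, opn O /\ O g /\ 0 < delta /\
      forall h z, O h -> dist z y < delta -> dist (act h z) (act g y) < eps.

(* pi-uniformity w.r.t. the uniformity of the metric d
   (basic entourages {(x,y) | d x y < eps}). *)
Definition pi_uniform {G X : Type} (opn : (G -> Prop) -> Prop)
    (d : X -> X -> R) (pi : G -> X -> X) : Prop :=
  forall eps g0, 0 < eps ->
    exists delta O, 0 < delta /\ opn O /\ O g0 /\
      forall g x y, O g -> d x y < delta -> d (pi g x) (pi g y) < eps.

Definition bounded_orbit {G X : Type} (d : X -> X -> R) (pi : G -> X -> X) (x0 : X) : Prop :=
  exists M, forall g h, d (pi g x0) (pi h x0) <= M.

Definition is_boolean_group {E : Type} (add : E -> E -> E) (zero : E) (opp : E -> E) : Prop :=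
  (forall u v w, add u (add v w) = add (add u v) w) /\
  (forall u v, add u v = add v u) /\
  (forall u, add zero u = u) /\
  (forall u, add (opp u) u = zero) /\
  (forall u, add u u = zero).

Definition is_ultranorm {E : Type} (add : E -> E -> E) (zero : E) (opp : E -> E)
    (nrm : E -> R) : Prop :=
  (forall u, 0 <= nrm u) /\
  (forall u, nrm u = 0 <-> u = zero) /\
  (forall u, nrm u = nrm (opp u)) /\
  (forall u v, nrm (add u v) <= Rmax (nrm u) (nrm v)).

Definition is_group_hom {E : Type} (add : E -> E -> E) (f : E -> E) : Prop :=
  forall u v, f (add u v) = add (f u) (f v).

Definition metric_closed {E : Type} (dist : E -> E -> R) (A : E -> Prop) : Prop :=
  forall u, (forall eps, 0 < eps -> exists a, A a /\ dist u a < eps) -> A u.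

(* Main.v *)
Require Import Defs.
From Stdlib Require Import Reals Lra List Classical ClassicalEpsilon FunctionalExtensionality ProofIrrelevance Bool.
Open Scope R_scope.

Definition dec (P : Prop) : bool := if excluded_middle_informative P then true else false.
Lemma dec_t (P : Prop) : P -> dec P = true.
Proof. unfold dec; destruct excluded_middle_informative; tauto. Qed.
Lemma dec_f (P : Prop) : ~ P -> dec P = false.
Proof. unfold dec; destruct excluded_middle_informative; tauto. Qed.
Lemma dec_true (P : Prop) : dec P = true -> P.
Proof. unfold dec; destruct excluded_middle_informative; congruence. Qed.

Definition S0 (S : R -> Prop) : R -> Prop := fun r => r = 0 \/ S r.
Definition nrmS (S : R -> Prop) : R :=
  match excluded_middle_informative (bound (S0 S)) with
  | left H => proj1_sig (completeness (S0 S) H (ex_intro _ 0 (or_introl eq_refl)))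
  | right _ => 0 end.

Lemma nrmS_lub S : bound (S0 S) -> is_lub (S0 S) (nrmS S).
Proof. intro H. unfold nrmS. destruct excluded_middle_informative as [H'|H'].
  - destruct completeness; simpl; auto. - tauto. Qed.
Lemma nrmS_ge S r : bound (S0 S) -> S r -> r <= nrmS S.
Proof. intros H Hr. destruct (nrmS_lub S H) as [H1 _]. apply H1. right; auto. Qed.
Lemma nrmS_nn S : bound (S0 S) -> 0 <= nrmS S.
Proof. intros H. destruct (nrmS_lub S H) as [H1 _]. apply H1. left; auto. Qed.
Lemma nrmS_le S K : 0 <= K -> (forall r, S r -> r <= K) -> nrmS S <= K.
Proof. intros HK H. assert (Hb : bound (S0 S)).
  { exists K. intros r [->|Hr]; auto. }
  destruct (nrmS_lub S Hb) as [_ H2]. apply H2. intros r [->|Hr]; auto. Qed.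

Ltac rmx := unfold Rmax, Rmin in *; repeat destruct Rle_dec; try lra.

Section Metric.
Variable X : Type.
Variable d : X -> X -> R.
Variable x0 : X.
Hypothesis Hu : is_ultrametric d.

Lemma d_nn x y : 0 <= d x y. Proof. apply Hu. Qed.
Lemma d_sym x y : d x y = d y x. Proof. apply Hu. Qed.
Lemma d_ult x y z : d x z <= Rmax (d x y) (d y z). Proof. apply Hu. Qed.
Lemma d_refl x : d x x = 0. Proof. apply Hu; auto. Qed.
Lemma d_pos x y : x <> y -> 0 < d x y.
Proof. intro H. destruct (d_nn x y) as [h|h]; auto. exfalso; apply H, Hu; auto. Qed.

Definition rho x := Rmax 1 (d x x0).
Lemma rho_ge1 x : 1 <= rho x. Proof. unfold rho; rmx. Qed.
Lemma rho_ult c z : rho c <= Rmax (d c z) (rho z).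
Proof. unfold rho. pose proof (d_ult c z x0). rmx. Qed.
Lemma d_rho x y : d x y <= Rmax (rho x) (rho y).
Proof. unfold rho. pose proof (d_ult x x0 y). rewrite (d_sym x0 y) in H. rmx. Qed.

Definition adm (B : X -> Prop) r := 0 < r /\ (forall u v, B u -> d u v < r -> B v) /\ (forall u, B u -> r <= rho u).
Definition posB B := exists r, adm B r.
Definition F := (X -> Prop) -> bool.
Definition alp (x : X) : F := fun B => dec (B x /\ posB B).
Definition xr (f g : F) : F := fun B => xorb (f B) (g B).
Definition zr : F := fun _ => false.
Definition sumL (l : list X) : F := fold_right (fun x acc => xr (alp x) acc) zr l.
Definition inE (f : F) := exists l, f = sumL l.
Definition Sf (f : F) : R -> Prop := fun r => exists B, f B = true /\ adm B r.
Definition nrmF f := nrmS (Sf f).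

Lemma sumL_true l B : sumL l B = true -> exists x, In x l /\ alp x B = true.
Proof. induction l as [|a l IH]; simpl. - discriminate.
  - unfold xr. destruct (alp a B) eqn:E1; simpl. + intros _; exists a; auto.
    + intros H; destruct (IH H) as [x [? ?]]; exists x; auto. Qed.

Lemma alp_true x B : alp x B = true -> B x /\ posB B.
Proof. intro H; apply dec_true; exact H. Qed.

Definition Kl (l : list X) := fold_right (fun x a => Rmax (rho x) a) 0 l.
Lemma Kl_ge l x : In x l -> rho x <= Kl l.
Proof. induction l as [|a l IH]; simpl; [tauto|]. intros [->|H]; [rmx|]. specialize (IH H). rmx. Qed.
Lemma Kl_nn l : 0 <= Kl l. Proof. induction l; simpl; rmx. Qed.

Lemma inE_bnd f : inE f -> bound (S0 (Sf f)).
Proof. intros [l ->]. exists (Kl l). intros r [->|[B [H1 H2]]]. apply Kl_nn.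
  destruct (sumL_true _ _ H1) as [x [Hx Hb]]. apply alp_true in Hb.
  destruct H2 as [_ [_ H3]]. apply Rle_trans with (rho x); [apply H3; tauto|]. apply Kl_ge; auto. Qed.

Lemma nrmF_ge f B r : inE f -> f B = true -> adm B r -> r <= nrmF f.
Proof. intros H1 H2 H3. apply nrmS_ge. apply inE_bnd; auto. exists B; auto. Qed.
Lemma nrmF_nn f : inE f -> 0 <= nrmF f.
Proof. intros; apply nrmS_nn, inE_bnd; auto. Qed.
Lemma nrmF_le f K : 0 <= K -> (forall B r, f B = true -> adm B r -> r <= K) -> nrmF f <= K.
Proof. intros HK H. apply nrmS_le; auto. intros r [B [? ?]]; eauto. Qed.

Lemma sumL_app l1 l2 : sumL (l1 ++ l2) = xr (sumL l1) (sumL l2).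
Proof. induction l1; simpl; apply functional_extensionality; intro B; unfold xr, zr.
  - reflexivity. - rewrite IHl1. unfold xr. destruct (alp a B), (sumL l1 B), (sumL l2 B); reflexivity. Qed.

Lemma inE_xr f g : inE f -> inE g -> inE (xr f g).
Proof. intros [l1 ->] [l2 ->]. exists (l1 ++ l2). symmetry; apply sumL_app. Qed.
Lemma inE_alp x : inE (alp x).
Proof. exists (x :: nil). simpl. apply functional_extensionality; intro B; unfold xr, zr. destruct (alp x B); reflexivity. Qed.
Lemma inE_zr : inE zr. Proof. exists nil; reflexivity. Qed.

Lemma nrmF_ult f g : inE f -> inE g -> nrmF (xr f g) <= Rmax (nrmF f) (nrmF g).
Proof. intros Hf Hg. pose proof (nrmF_nn f Hf). apply nrmF_le. rmx.
  intros B r H1 H2. unfold xr in H1. destruct (f B) eqn:E1.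
  - pose proof (nrmF_ge f B r Hf E1 H2). rmx.
  - simpl in H1. pose proof (nrmF_ge g B r Hg H1 H2). rmx. Qed.

Lemma nrmF_zero f : nrmF f = 0 -> inE f -> f = zr.
Proof. intros H Hf. apply functional_extensionality; intro B. unfold zr.
  destruct (f B) eqn:E1; auto. destruct Hf as [l Hl]. rewrite Hl in E1.
  destruct (sumL_true _ _ E1) as [x [_ Hx]]. apply alp_true in Hx. destruct Hx as [_ [r Hr]].
  pose proof (nrmF_ge (sumL l) B r (ex_intro _ l eq_refl) E1 Hr). rewrite <- Hl in H0. destruct Hr. lra. Qed.

Lemma nrmF_zr : nrmF zr = 0.
Proof. apply Rle_antisym. apply nrmF_le. lra. unfold zr; discriminate. apply nrmF_nn, inE_zr. Qed.

Lemma ball_adm c R : 0 < R -> R <= rho c -> adm (fun z => d c z < R) R.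
Proof. intros H0 H1. split; [auto|split].
  - intros u v Hu1 Hv. pose proof (d_ult c u v). rmx.
  - intros u Hu1. pose proof (rho_ult c u). rmx. Qed.

Lemma iso x y : nrmF (xr (alp x) (alp y)) = d x y.
Proof. apply Rle_antisym.
  - apply nrmF_le. apply d_nn. intros B r H1 H2. destruct (Rle_lt_dec r (d x y)); auto.
    exfalso. assert (HP : posB B) by (exists r; auto). destruct H2 as [_ [Hs _]].
    unfold xr, alp in H1. destruct (classic (B x)) as [Bx|Bx].
    + assert (B y) by (apply (Hs x); auto). rewrite !dec_t in H1 by tauto. discriminate.
    + destruct (classic (B y)) as [By|By].
      * apply Bx, (Hs y); auto. rewrite d_sym; auto.
      * rewrite !dec_f in H1 by tauto. discriminate.
  - destruct (classic (x = y)) as [<-|Hne]. rewrite d_refl. apply nrmF_nn, inE_xr; apply inE_alp.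
    pose proof (d_pos _ _ Hne). pose proof (d_rho x y).
    assert (Hi : inE (xr (alp x) (alp y))) by (apply inE_xr; apply inE_alp).
    destruct (Rle_dec (d x y) (rho x)).
    + apply (nrmF_ge _ (fun z => d x z < d x y)); auto; [|apply ball_adm; auto].
      assert (posB (fun z => d x z < d x y)) by (eexists; apply ball_adm; eauto).
      unfold xr, alp. rewrite dec_t, dec_f; auto. intros [? _]; lra. rewrite d_refl; auto.
    + assert (Hr : d y x <= rho y) by (rewrite d_sym; rmx).
      assert (Hp : 0 < d y x) by (rewrite d_sym; auto).
      rewrite d_sym.
      apply (nrmF_ge _ (fun z => d y z < d y x)); auto; [|apply ball_adm; auto].
      assert (posB (fun z => d y z < d y x)) by (eexists; apply ball_adm; eauto).
      unfold xr, alp. rewrite (dec_f (d y x < d y x /\ _)), dec_t; auto.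
      rewrite d_refl; auto. intros [? _]; lra. Qed.


Lemma sumL_false l B : (forall z, In z l -> ~ B z) -> sumL l B = false.
Proof. induction l as [|a l IH]; simpl; intros H; auto. unfold xr. rewrite IH by auto.
  unfold alp. rewrite dec_f; auto. intros [? _]. apply (H a); auto. Qed.

Lemma parity L c B : NoDup L -> In c L -> B c -> posB B ->
  (forall z, In z L -> z <> c -> ~ B z) -> sumL L B = true.
Proof. induction L as [|a L IH]; simpl; [tauto|]. intros Hn Hc HB Hp Hz.
  inversion Hn; subst. unfold xr. destruct (classic (a = c)) as [->|Hne].
  - rewrite sumL_false. unfold alp; rewrite dec_t; auto.
    intros z Hz' Bz. apply (Hz z); auto. intro; subst; tauto.
  - destruct Hc as [Hc|Hc]; [tauto|]. rewrite IH; auto. unfold alp; rewrite dec_f; auto.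
    intros [? _]. apply (Hz a); auto. Qed.

Lemma reduce l : exists l', NoDup l' /\ sumL l = sumL l'.
Proof. induction l as [|a l [l' [Hn He]]]. exists nil; split; [constructor|auto].
  destruct (classic (In a l')) as [Hi|Hi].
  - destruct (in_split _ _ Hi) as [l1 [l2 ->]]. exists (l1 ++ l2). split. eapply NoDup_remove_1; eauto.
    simpl. rewrite He, !sumL_app. simpl. apply functional_extensionality; intro B. unfold xr.
    destruct (alp a B), (sumL l1 B), (sumL l2 B); reflexivity.
  - exists (a :: l'). split. constructor; auto. simpl. rewrite He; auto. Qed.

Definition mind c (L : list X) := fold_right (fun z a => if excluded_middle_informative (z = c) then a else Rmin (d c z) a) 1 L.
Lemma mind_pos c L : 0 < mind c L.
Proof. induction L as [|a L IH]; simpl. lra. destruct excluded_middle_informative; auto.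
  assert (0 < d c a) by (apply d_pos; auto). rmx. Qed.
Lemma mind_le1 c L : mind c L <= 1.
Proof. induction L as [|a L IH]; simpl. lra. destruct excluded_middle_informative; auto. rmx. Qed.
Lemma mind_le c L z : In z L -> z <> c -> mind c L <= d c z.
Proof. induction L as [|a L IH]; simpl. tauto. intros [->|H] Hne; destruct excluded_middle_informative; try tauto.
  rmx. auto. specialize (IH H Hne). rmx. Qed.

Lemma closed_lem l : (forall eps, 0 < eps -> exists x, nrmF (xr (sumL l) (alp x)) < eps) -> exists x, sumL l = alp x.
Proof. intro H. destruct (reduce l) as [L [Hn He]]. rewrite He in H |- *.
  destruct L as [|a [|b L]].
  - exfalso. destruct (H 1) as [x Hx]; [lra|].
    assert (adm (fun _ => True) 1). { split. lra. split. auto. intros; apply rho_ge1. }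
    assert (1 <= nrmF (xr (sumL nil) (alp x))).
    { apply (nrmF_ge _ (fun _ => True)); auto. apply inE_xr. apply inE_zr. apply inE_alp.
      unfold xr, alp; simpl; unfold zr. rewrite dec_t; auto. split; auto. eexists; eauto. }
    lra.
  - exists a. simpl. apply functional_extensionality; intro B; unfold xr, zr. destruct (alp a B); auto.
  - exfalso. inversion Hn; subst. assert (Hab : a <> b) by (intro; subst; simpl in *; tauto).
    set (LL := a :: b :: L) in *.
    pose proof (mind_pos a LL). pose proof (mind_pos b LL).
    destruct (H (Rmin (mind a LL) (mind b LL))) as [x Hx]; [rmx|].
    assert (Hc : exists c, In c LL /\ mind c LL <= d c x /\ Rmin (mind a LL) (mind b LL) <= mind c LL).
    { pose proof (d_ult a x b) as Hul.
      assert (Ma : mind a LL <= d a b) by (apply mind_le; simpl; auto).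
      assert (Mb : mind b LL <= d b a) by (apply mind_le; simpl; auto).
      rewrite (d_sym b a) in Mb. rewrite (d_sym x b) in Hul.
      destruct (Rle_dec (d a b) (d a x)).
      - exists a. split. simpl; auto. split. lra. rmx.
      - exists b. split. simpl; auto. split. rmx. rmx. }
    destruct Hc as [c [Hc1 [Hc2 Hc3]]].
    pose proof (mind_pos c LL). pose proof (mind_le1 c LL).
    assert (Ha : adm (fun z => d c z < mind c LL) (mind c LL)).
    { apply ball_adm; auto. pose proof (rho_ge1 c). lra. }
    assert (mind c LL <= nrmF (xr (sumL LL) (alp x))).
    { apply (nrmF_ge _ (fun z => d c z < mind c LL)); auto. apply inE_xr. exists LL; auto. apply inE_alp.
      unfold xr. rewrite (parity LL c).
      - unfold alp; rewrite dec_f; auto. intros [? _]; lra.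
      - auto.
      - auto.
      - cbv beta. rewrite d_refl; auto.
      - eexists; eauto.
      - intros z Hz Hzc. pose proof (mind_le c LL z Hz Hzc). cbv beta; intro; lra. }
    lra. Qed.


Variable G : Type.
Variables (mul : G -> G -> G) (inv : G -> G) (e : G) (openG : (G -> Prop) -> Prop) (pi : G -> X -> X).
Hypothesis HG : is_topological_group mul inv e openG.
Hypothesis Ha : is_action mul e pi.
Hypothesis Hc : action_continuous openG d pi.
Hypothesis Hpu : pi_uniform openG d pi.

Lemma pi_e z : pi e z = z. Proof. apply Ha. Qed.
Lemma pi_mul g h z : pi (mul g h) z = pi g (pi h z). Proof. apply Ha. Qed.
Lemma pi_inv g z : pi g (pi (inv g) z) = z.
Proof. rewrite <- pi_mul. destruct HG as [[_ [_ [_ [_ H]]]] _]. rewrite H. apply pi_e. Qed.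

Lemma posB_comp g B : posB B -> posB (fun z => B (pi g z)).
Proof. intros [r [Hr [Hs Hrho]]]. destruct (Hpu r g Hr) as [dl [O [Hd [_ [Og HO]]]]].
  exists (Rmin dl 1). split; [rmx|split].
  - intros u v Bu Huv. apply (Hs (pi g u)); auto. apply HO; auto. rmx.
  - intros u _. pose proof (rho_ge1 u). rmx. Qed.

Lemma posB_comp_iff g B : posB (fun z => B (pi g z)) <-> posB B.
Proof. split; [|apply posB_comp]. intro H. apply (posB_comp (inv g)) in H.
  assert (E1 : (fun z => B (pi g (pi (inv g) z))) = B).
  { apply functional_extensionality; intro z. rewrite pi_inv; auto. }
  rewrite E1 in H; auto. Qed.

Definition actF (g : G) (f : F) : F := fun B => f (fun z => B (pi g z)).

Lemma dec_iff (P Q : Prop) : (P <-> Q) -> dec P = dec Q.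
Proof. intro H. destruct (classic P). rewrite !dec_t; tauto. rewrite !dec_f; tauto. Qed.

Lemma actF_alp g x : actF g (alp x) = alp (pi g x).
Proof. apply functional_extensionality; intro B. unfold actF, alp. apply dec_iff.
  rewrite posB_comp_iff. tauto. Qed.

Lemma actF_sumL g l : actF g (sumL l) = sumL (map (pi g) l).
Proof. induction l as [|a l IH]; simpl. reflexivity.
  rewrite <- IH, <- actF_alp. reflexivity. Qed.

Lemma inE_act g f : inE f -> inE (actF g f).
Proof. intros [l ->]. exists (map (pi g) l). apply actF_sumL. Qed.

Lemma actF_e f : actF e f = f.
Proof. apply functional_extensionality; intro B. unfold actF.
  assert (E1 : (fun z => B (pi e z)) = B) by (apply functional_extensionality; intro; rewrite pi_e; auto).
  rewrite E1; auto. Qed.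

Lemma actF_mul g h f : actF (mul g h) f = actF g (actF h f).
Proof. apply functional_extensionality; intro B. unfold actF.
  assert (E1 : (fun z => B (pi (mul g h) z)) = (fun z => B (pi g (pi h z))))
    by (apply functional_extensionality; intro; rewrite pi_mul; auto).
  rewrite E1; auto. Qed.

Definition Mpair (g h : G) (l : list X) := fold_right (fun x a => Rmax (d (pi h x) (pi g x)) a) 0 l.

Lemma pair_bound g h l : nrmF (xr (sumL (map (pi h) l)) (sumL (map (pi g) l))) <= Mpair g h l.
Proof. induction l as [|a l IH]; simpl.
  - unfold xr; simpl. unfold zr. simpl. rewrite <- nrmF_zr. right; reflexivity.
  - assert (E1 : xr (xr (alp (pi h a)) (sumL (map (pi h) l))) (xr (alp (pi g a)) (sumL (map (pi g) l)))
       = xr (xr (alp (pi h a)) (alp (pi g a))) (xr (sumL (map (pi h) l)) (sumL (map (pi g) l)))).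
    { apply functional_extensionality; intro B; unfold xr.
      destruct (alp (pi h a) B), (alp (pi g a) B), (sumL (map (pi h) l) B), (sumL (map (pi g) l) B); reflexivity. }
    rewrite E1. eapply Rle_trans. apply nrmF_ult.
    apply inE_xr; apply inE_alp. apply inE_xr; eexists; eauto.
    rewrite iso. rmx. Qed.

Lemma Mpair_lt g h l eps : 0 < eps -> (forall x, In x l -> d (pi h x) (pi g x) < eps) -> Mpair g h l < eps.
Proof. induction l as [|a l IH]; simpl; intros H1 H2. auto.
  assert (Hx := H2 a (or_introl eq_refl)). assert (Mpair g h l < eps) by auto. rmx. Qed.

Lemma topo : is_topology openG. Proof. apply HG. Qed.

Lemma opens_list g (l : list X) eps : 0 < eps -> exists O, openG O /\ O g /\ forall h, O h -> forall x, In x l -> d (pi h x) (pi g x) < eps.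
Proof. intro He. induction l as [|a l IH].
  - exists (fun _ => True). split. apply topo. simpl; tauto.
  - destruct IH as [O1 [Ho1 [Og1 H1]]].
    destruct (Hc g a eps He) as [O2 [dl [Ho2 [Og2 [Hd H2]]]]].
    exists (fun x => O1 x /\ O2 x). split. apply topo; auto. split. auto.
    intros h [Oh1 Oh2] x [->|Hx]; auto. apply H2; auto. rewrite d_refl; auto. Qed.

Lemma cont_F g (l : list X) eps : 0 < eps -> exists O dl, openG O /\ O g /\ 0 < dl /\ forall h w, O h -> inE w -> nrmF (xr w (sumL l)) < dl ->
     nrmF (xr (actF h w) (actF g (sumL l))) < eps.
Proof. intro He. assert (He2 : 0 < eps / 2) by lra.
  destruct (Hpu (eps/2) g He2) as [dl [O1 [Hd [Ho1 [Og1 H1]]]]].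
  destruct (opens_list g l eps He) as [O2 [Ho2 [Og2 H2]]].
  exists (fun x => O1 x /\ O2 x), (Rmin dl 1). split. apply topo; auto. split. auto. split. rmx.
  intros h w [Oh1 Oh2] Hw Hn.
  assert (Hi : inE (xr w (sumL l))) by (apply inE_xr; auto; eexists; eauto).
  assert (E1 : xr (actF h w) (actF g (sumL l)) = xr (actF h (xr w (sumL l))) (xr (actF h (sumL l)) (actF g (sumL l)))).
  { apply functional_extensionality; intro B; unfold xr, actF.
    destruct (w (fun z => B (pi h z))), (sumL l (fun z => B (pi h z))), (sumL l (fun z => B (pi g z))); reflexivity. }
  rewrite E1. eapply Rle_lt_trans. apply nrmF_ult. apply inE_act; auto.
  apply inE_xr; apply inE_act; eexists; eauto.
  assert (A1 : nrmF (actF h (xr w (sumL l))) <= eps / 2).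
  { apply nrmF_le. lra. intros B r HB Hadm. destruct (Rle_lt_dec r (eps/2)); auto. exfalso.
    destruct Hadm as [Hr [Hs Hrho]].
    assert (Hadm2 : adm (fun z => B (pi h z)) (Rmin dl 1)).
    { split. rmx. split.
      - intros u v Bu Huv. apply (Hs (pi h u)); auto. assert (d (pi h u) (pi h v) < eps/2) by (apply H1; auto; rmx). lra.
      - intros u _. pose proof (rho_ge1 u). rmx. }
    pose proof (nrmF_ge _ _ _ Hi HB Hadm2). lra. }
  assert (A2 : nrmF (xr (actF h (sumL l)) (actF g (sumL l))) < eps).
  { rewrite !actF_sumL. eapply Rle_lt_trans. apply pair_bound. apply Mpair_lt; auto. }
  rmx. Qed.


Definition EE := {f : F | inE f}.
Lemma Eeq (u v : EE) : proj1_sig u = proj1_sig v -> u = v.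
Proof. destruct u as [u pu], v as [v pv]; simpl; intros ->. f_equal; apply proof_irrelevance. Qed.
Definition Eadd (u v : EE) : EE := exist _ (xr (proj1_sig u) (proj1_sig v)) (inE_xr _ _ (proj2_sig u) (proj2_sig v)).
Definition Ezero : EE := exist _ zr inE_zr.
Definition Eopp (u : EE) : EE := u.
Definition Enrm (u : EE) : R := nrmF (proj1_sig u).
Definition Eact (g : G) (u : EE) : EE := exist _ (actF g (proj1_sig u)) (inE_act g _ (proj2_sig u)).
Definition Ealpha (x : X) : EE := exist _ (alp x) (inE_alp x).

Lemma main_sec :
  exists (E : Type) (add : E -> E -> E) (zero : E) (opp : E -> E) (nrm : E -> R)
         (act : G -> E -> E) (alpha : X -> E),
    is_boolean_group add zero opp /\
    is_ultranorm add zero opp nrm /\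
    is_action mul e act /\
    (forall g, is_group_hom add (act g)) /\
    action_continuous openG (fun u v => nrm (add u (opp v))) act /\
    (forall g x, alpha (pi g x) = act g (alpha x)) /\
    (forall x y, nrm (add (alpha x) (opp (alpha y))) = d x y) /\
    metric_closed (fun u v => nrm (add u (opp v))) (fun u => exists x, u = alpha x).
Proof.
  exists EE, Eadd, Ezero, Eopp, Enrm, Eact, Ealpha.
  split; [|split; [|split; [|split; [|split; [|split; [|split]]]]]].
  - split; [|split; [|split; [|split]]]; intros; apply Eeq; simpl; apply functional_extensionality; intro B; unfold xr, zr, Eopp.
    + destruct (proj1_sig u B), (proj1_sig v B), (proj1_sig w B); reflexivity.
    + destruct (proj1_sig u B), (proj1_sig v B); reflexivity.
    + reflexivity.
    + destruct (proj1_sig u B); reflexivity.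
    + destruct (proj1_sig u B); reflexivity.
  - split; [|split; [|split]].
    + intro u. apply nrmF_nn, (proj2_sig u).
    + intro u. split.
      * intro H. apply Eeq. apply nrmF_zero; auto. apply (proj2_sig u).
      * intros ->. apply nrmF_zr.
    + reflexivity.
    + intros u v. apply nrmF_ult; apply proj2_sig.
  - split.
    + intro u. apply Eeq. apply actF_e.
    + intros g h u. apply Eeq. apply actF_mul.
  - intros g u v. apply Eeq. reflexivity.
  - intros g u eps Heps. destruct u as [f [l Hl]]. subst f.
    destruct (cont_F g l eps Heps) as [O [dl [H1 [H2 [H3 H4]]]]].
    exists O, dl. split; auto. split; auto. split; auto.
    intros h w Oh Hw. apply H4; auto. apply proj2_sig.
  - intros g x. apply Eeq. symmetry. apply actF_alp.
  - intros x y. apply iso.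
  - intros u Hcl. destruct u as [f [l Hl]]. subst f.
    destruct (closed_lem l) as [x Hx].
    + intros eps He. destruct (Hcl eps He) as [a [[x ->] Ha']]. exists x. exact Ha'.
    + exists x. apply Eeq. exact Hx.
Qed.

End Metric.

Theorem theorem6p5 (X G : Type) (d : X -> X -> R)
    (mul : G -> G -> G) (inv : G -> G) (e : G) (openG : (G -> Prop) -> Prop)
    (pi : G -> X -> X) (x0 : X) :
  is_ultrametric d ->
  is_topological_group mul inv e openG ->
  is_action mul e pi ->
  action_continuous openG d pi ->
  pi_uniform openG d pi ->
  bounded_orbit d pi x0 ->
  exists (E : Type) (add : E -> E -> E) (zero : E) (opp : E -> E) (nrm : E -> R)
         (act : G -> E -> E) (alpha : X -> E),
    is_boolean_group add zero opp /\
    is_ultranorm add zero opp nrm /\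
    is_action mul e act /\
    (forall g, is_group_hom add (act g)) /\
    action_continuous openG (fun u v => nrm (add u (opp v))) act /\
    (forall g x, alpha (pi g x) = act g (alpha x)) /\
    (forall x y, nrm (add (alpha x) (opp (alpha y))) = d x y) /\
    metric_closed (fun u v => nrm (add u (opp v))) (fun u => exists x, u = alpha x).
Proof.
  intros Hu HG Ha Hc Hpu _.
  exact (main_sec X d x0 Hu G mul inv e openG pi HG Ha Hc Hpu).
Qed.
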